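(* Let $\star$ be a star operation on an integral domain $R$. If every nonzero finitely generated ideal of $R$ is $\star$-basic (the finite $\star$-basic ideal property), then $R$ is integrally closed.
   Context: A star operation on a domain $R$ with quotient field $K$ is a map $I\mapsto I^\star$ on nonzero fractional ideals with $(aI)^\star=aI^\star$ ($0\ne a\in K$), $R^\star=R$, $I\subseteq I^\star$, $I\subseteq J\Rightarrow I^\star\subseteq J^\star$, $I^{\star\star}=I^\star$. For a nonzero ideal $I$, an ideal $J\subseteq I$ is a $\star$-reduction of $I$ if $(JI^n)^\star=(I^{n+1})^\star$ for some integer $n\ge0$; $I$ is $\star$-basic if every $\star$-reduction $J$ of $I$ satisfies $J^\star=I^\star$. *)

(* Defs.v *)
From HB Require Import structures.
From mathcomp Require Import all_boot all_order all_algebra.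
From mathcomp Require Import fraction.
Set Implicit Arguments. Unset Strict Implicit. Unset Printing Implicit Defensive.
Import GRing.Theory.
Local Open Scope ring_scope.

Section StarDefs.
Variable R : idomainType.

Definition K := {fraction R}.
Definition emb (r : R) : K := @FracField.tofrac R r.

(* Subsets of K (fractional ideals, ideals of R identified with their image). *)
Definition kset := K -> Prop.

Definition subset (A B : kset) : Prop := forall x, A x -> B x.
Definition seteq (A B : kset) : Prop := forall x, A x <-> B x.

Definition Rset : kset := fun x => exists r : R, x = emb r.

Definition nonzeroset (A : kset) : Prop := exists x, A x /\ x != 0.

Definition submodule (A : kset) : Prop :=
  [/\ A 0, (forall x y, A x -> A y -> A (x + y))
    & (forall (r : R) x, A x -> A (emb r * x))].

Definition frac_ideal (A : kset) : Prop :=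
  [/\ submodule A, nonzeroset A
    & exists d : R, d != 0 /\ forall x, A x -> Rset (emb d * x)].

Definition ideal (A : kset) : Prop := submodule A /\ subset A Rset.

Definition fin_gen (A : kset) : Prop :=
  exists s : seq K, (forall a, a \in s -> Rset a) /\
    seteq A (fun x => exists c : 'I_(size s) -> R,
                        x = \sum_(i < size s) emb (c i) * s`_i).

Definition scaleset (a : K) (A : kset) : kset := fun x => exists y, A y /\ x = a * y.

Definition mulset (A B : kset) : kset := fun x =>
  exists s : seq (K * K), (forall p, p \in s -> A p.1 /\ B p.2) /\
    x = \sum_(p <- s) p.1 * p.2.

Definition powset (A : kset) (n : nat) : kset := iter n (mulset A) Rset.

(* star operation on R (the map is only constrained on nonzero fractional ideals) *)
Definition is_star (st : kset -> kset) : Prop :=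
  [/\ (forall (a : K) A, a != 0 -> frac_ideal A ->
          seteq (st (scaleset a A)) (scaleset a (st A))),
      seteq (st Rset) Rset,
      (forall A, frac_ideal A -> subset A (st A)),
      (forall A B, frac_ideal A -> frac_ideal B -> subset A B ->
          subset (st A) (st B))
    & (forall A, frac_ideal A -> seteq (st (st A)) (st A))].

Definition star_reduction (st : kset -> kset) (J I : kset) : Prop :=
  [/\ ideal J, nonzeroset J, subset J I
    & exists n : nat, seteq (st (mulset J (powset I n))) (st (powset I n.+1))].

Definition star_basic (st : kset -> kset) (I : kset) : Prop :=
  forall J, star_reduction st J I -> seteq (st J) (st I).

Definition integrally_closed : Prop :=
  forall x : K, (exists p : {poly R}, p \is monic /\ root (map_poly emb p) x) ->
    Rset x.

End StarDefs.

(* Main.v *)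
Require Import Defs.
From HB Require Import structures.
From mathcomp Require Import all_boot all_order all_algebra.
From mathcomp Require Import fraction generic_quotient.
From Stdlib Require Import FunctionalExtensionality PropExtensionality.
Set Implicit Arguments. Unset Strict Implicit. Unset Printing Implicit Defensive.
Import GRing.Theory.
Local Open Scope ring_scope.

Section Helpers.
Variable R : idomainType.
Local Notation tf := (@FracField.tofrac R).

Lemma frac_repr (x : {fraction R}) : exists a b : R, b != 0 /\ x = tf a / tf b.
Proof.
elim/quotW: x => r.
have hd := denom_ratioP r.
exists (\n_r), (\d_r); split; first exact: hd.
rewrite !piE; apply/eqmodP; rewrite /= FracField.equivfE /FracField.mulf /FracField.invf.
by rewrite !(numer_Ratio _ (oner_neq0 _), denom_Ratio _ (oner_neq0 _)) (numer_Ratio _ hd) (denom_Ratio _ hd) mul1r mulr1 (numer_Ratio _ hd) (denom_Ratio _ hd) mulrC eqxx.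
Qed.

Lemma seteq_eq (A B : kset R) : seteq A B -> A = B.
Proof.
move=> h; apply: functional_extensionality => y.
apply: propositional_extensionality; exact: h.
Qed.

Lemma tf_inj : injective tf.
Proof. by move=> u v /eqP; rewrite tofrac_eq => /eqP. Qed.

Lemma Rset0 : @Rset R 0.
Proof. by exists 0; rewrite /emb rmorph0. Qed.
Lemma RsetD u v : @Rset R u -> @Rset R v -> @Rset R (u + v).
Proof. by move=> [r ->] [t ->]; exists (r + t); rewrite /emb rmorphD. Qed.
Lemma RsetM u v : @Rset R u -> @Rset R v -> @Rset R (u * v).
Proof. by move=> [r ->] [t ->]; exists (r * t); rewrite /emb rmorphM. Qed.

Lemma Rset_sum (I : Type) (s : seq I) (P : pred I) (F : I -> K R) :
  (forall i, P i -> @Rset R (F i)) -> @Rset R (\sum_(i <- s | P i) F i).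
Proof.
move=> h; apply: (big_ind (@Rset R)); [exact: Rset0| exact: RsetD| exact: h].
Qed.

Lemma submodule_Rset : submodule (@Rset R).
Proof.
split; [exact: Rset0| exact: RsetD|].
by move=> r y hy; apply: RsetM => //; exists r.
Qed.

Lemma ideal_frac (A : kset R) : ideal A -> nonzeroset A -> frac_ideal A.
Proof.
move=> [hs hsub] hnz; split => //; exists 1; split; first exact: oner_neq0.
by move=> y /hsub; rewrite /emb rmorph1 mul1r.
Qed.

Lemma frac_Rset : frac_ideal (@Rset R).
Proof.
apply: ideal_frac; first by split; [exact: submodule_Rset| by []].
by exists 1; split; [exists 1; rewrite /emb rmorph1| exact: oner_neq0].
Qed.

Lemma mulset_R (A : kset R) : submodule A -> seteq (mulset A (@Rset R)) A.
Proof.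
move=> [h0 hD hM] y; split.
  move=> [s [hs ->]]; elim: s hs => [|u s IH] hs; first by rewrite big_nil.
  rewrite big_cons; apply: hD; last by apply: IH => p hp; apply: hs; rewrite in_cons hp orbT.
  have [hu1 [r hr]] := hs u (mem_head _ _).
  by rewrite hr mulrC; apply: hM.
move=> hy; exists [:: (y, 1)]; split.
  move=> p; rewrite mem_seq1 => /eqP -> /=; split => //; exists 1; by rewrite /emb rmorph1.
by rewrite big_cons big_nil addr0 mulr1.
Qed.

Lemma mulset_sub (A B T : kset R) : T 0 -> (forall u v, T u -> T v -> T (u + v)) ->
  (forall u v, A u -> B v -> T (u * v)) -> Defs.subset (mulset A B) T.
Proof.
move=> h0 hD hM y [s [hs ->]]; elim: s hs => [|u s IH] hs; first by rewrite big_nil.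
rewrite big_cons; apply: hD; last by apply: IH => p hp; apply: hs; rewrite in_cons hp orbT.
by have [] := hs u (mem_head _ _); apply: hM.
Qed.

End Helpers.


Section Poly.
Variable R : idomainType.
Local Notation tf := (@FracField.tofrac R).

Lemma reduce (p : {poly R}) (x : K R) : p \is monic -> root (map_poly (@emb R) p) x ->
  forall q : {poly R}, exists q' : {poly R}, (size q' < size p)%N /\
     (map_poly (@emb R) q).[x] = (map_poly (@emb R) q').[x].
Proof.
move=> pm hr q; exists (q %% p); split; first by apply: Pdiv.Idomain.ltn_modpN0; exact: monic_neq0.
have := Pdiv.Idomain.divp_eq q p; rewrite (monicP pm) expr1n scale1r => {1}->.
rewrite /emb rmorphD rmorphM /= hornerD hornerM.
by move: hr; rewrite /root /emb => /eqP ->; rewrite mulr0 add0r.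
Qed.

Lemma emb_cx (a b : R) (N i : nat) : b != 0 -> (i <= N)%N ->
  exists r, emb (b ^+ N) * (emb a / emb b) ^+ i = emb r.
Proof.
move=> hb hi; exists (a ^+ i * b ^+ (N - i)).
have hb' : emb b ^+ i != 0 by rewrite expf_neq0 // /emb tofrac_eq0.
rewrite -(subnK hi) exprD /emb !rmorphM !rmorphXn /= subnK // expr_div_n.
by rewrite -mulrA [tf b ^+ i * _]mulrC divfK // mulrC.
Qed.

Lemma size_map_emb (q : {poly R}) : size (map_poly (@emb R) q) = size q.
Proof. by apply: size_map_inj_poly; [exact: tf_inj| rewrite /emb rmorph0]. Qed.

Lemma span_poly (n : nat) (F : nat -> K R) (y : K R) :
  (exists c : 'I_n -> R, y = \sum_(i < n) emb (c i) * F i) <->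
  (exists q : {poly R}, (size q <= n)%N /\ y = \sum_(i < n) emb q`_i * F i).
Proof.
split.
  move=> [c ->]; exists (\poly_(i < n) (if insub i is Some j then c j else 0)).
  split; first exact: size_poly.
  apply: eq_bigr => i _; rewrite coef_poly ltn_ord insubT; first exact: ltn_ord.
  move=> h /=.
  by rewrite (_ : Sub (val i) h = i) //; apply: val_inj.
by move=> [q [_ ->]]; exists (fun i => q`_i).
Qed.

End Poly.

Theorem lemma1p3 (R : idomainType) (st : kset R -> kset R) :
  is_star st ->
  (forall I : kset R, ideal I -> nonzeroset I -> fin_gen I -> star_basic st I) ->
  integrally_closed R.
Proof.
move=> [hsc hR hext hmono hidem] H x [p [pm hr]].
have [a [b [hb xe]]] := frac_repr x.
set N := size p.
have hN : (0 < N)%N by rewrite size_poly_gt0 monic_neq0.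
set c := b ^+ N.
have hc : emb c != 0 by rewrite /emb tofrac_eq0 expf_neq0.
have red := reduce pm hr.
have hcx : forall i, (i < N)%N -> Rset (emb c * x ^+ i).
  move=> i hi; have [r hr'] := @emb_cx R a b N i hb (ltnW hi).
  by exists r; rewrite xe.
have hIR : forall q : {poly R}, (size q <= N)%N -> Rset (emb c * (map_poly (@emb R) q).[x]).
  move=> q hq; rewrite horner_coef size_map_emb mulr_sumr.
  apply: Rset_sum => i _; rewrite coef_map_id0; last by rewrite /emb rmorph0.
  rewrite mulrCA; apply: RsetM; first by exists q`_i.
  apply: hcx; exact: leq_trans (ltn_ord i) hq.
pose I : kset R := fun y => exists q : {poly R}, (size q <= N)%N /\
   y = emb c * (map_poly (@emb R) q).[x].
have subI : submodule I.
  split.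
  - exists 0; split; first by rewrite size_poly0.
    by rewrite map_poly0 horner0 mulr0.
  - move=> u v [q1 [h1 ->]] [q2 [h2 ->]]; exists (q1 + q2); split.
      by rewrite (leq_trans (size_polyD _ _)) // geq_max h1 h2.
    by rewrite /emb rmorphD hornerD mulrDr.
  - move=> r u [q [hq ->]]; exists (r *: q); split.
      exact: leq_trans (size_scale_leq _ _) hq.
    by rewrite /emb map_polyZ hornerZ mulrCA.
have Iideal : ideal I by split => // y [q [hq ->]]; exact: hIR.
have Inz : nonzeroset I.
  have [q' [hq' e]] := red 1%:P.
  exists (emb c); split => //; exists q'; split; first exact: ltnW.
  by rewrite -e /emb map_polyC hornerC /= tofrac1 mulr1.
have Ifg : fin_gen I.
  exists [seq emb c * x ^+ i | i <- iota 0 N]; split.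
    move=> u /mapP [i]; rewrite mem_iota add0n => /andP[_ hi] ->; exact: hcx.
  set s := [seq _ | _ <- _].
  have hs : size s = N by rewrite size_map size_iota.
  have key : forall q : {poly R}, (size q <= N)%N ->
     emb c * (map_poly (@emb R) q).[x] = \sum_(i < size s) emb q`_i * s`_i.
    move=> q hq; rewrite hs (horner_coef_wide _ (n := N)) ?size_map_emb // mulr_sumr.
    apply: eq_bigr => i _.
    rewrite (nth_map 0%N) ?size_iota // nth_iota // add0n coef_map_id0; last by rewrite /emb rmorph0.
    by rewrite mulrCA.
  move=> y; split.
    move=> [q [hq ->]]; apply/span_poly; exists q; split; [by rewrite hs| exact: key].
  move=> /span_poly [q [hq ->]]; exists q; split; [by rewrite -hs| by rewrite key // -hs].
pose J : kset R := scaleset (emb c) (@Rset R).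
have subJ : submodule J.
  split.
  - exists 0; split; [exact: Rset0| by rewrite mulr0].
  - move=> u v [y1 [h1 ->]] [y2 [h2 ->]]; exists (y1 + y2); split; [exact: RsetD| by rewrite mulrDr].
  - move=> r u [y [hy ->]]; exists (emb r * y); split; last by rewrite mulrCA.
    by apply: RsetM => //; exists r.
have Jideal : ideal J by split => // u [y [hy ->]]; apply: RsetM => //; exists c.
have Jnz : nonzeroset J.
  exists (emb c); split => //; exists 1; split; last by rewrite mulr1.
  by exists 1; rewrite /emb tofrac1.
have JI : Defs.subset J I.
  move=> u [y [[r ->] ->]]; have [q' [hq' e]] := red r%:P; exists q'; split; first exact: ltnW.
  by rewrite -e /emb map_polyC hornerC.
pose T : kset R := fun y => exists q : {poly R}, y = emb (c * c) * (map_poly (@emb R) q).[x].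
have T0 : T 0 by exists 0; rewrite map_poly0 horner0 mulr0.
have TD : forall u v, T u -> T v -> T (u + v).
  by move=> u v [q1 ->] [q2 ->]; exists (q1 + q2); rewrite /emb rmorphD hornerD mulrDr.
have E1 : powset I 1 = I by apply: seteq_eq; exact: mulset_R.
have E2 : mulset J (powset I 1) = T.
  rewrite E1; apply: seteq_eq => y; split.
    apply: (mulset_sub T0 TD) => u v [u' [[r ->] ->]] [q [_ ->]].
    exists (r *: q); rewrite /emb rmorphM map_polyZ hornerZ.
    by rewrite -!mulrA; congr (_ * _); rewrite mulrCA.
  move=> [q ->]; have [q' [hq' e]] := red q.
  exists [:: (emb c * emb 1, emb c * (map_poly (@emb R) q').[x])]; split.
    move=> u; rewrite mem_seq1 => /eqP -> /=; split.
      by exists (emb 1); split => //; exists 1.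
    by exists q'; split => //; exact: ltnW.
  by rewrite big_cons big_nil addr0 /= e /emb tofrac1 mulr1 rmorphM mulrA.
have E3 : powset I 2 = T.
  change (mulset I (powset I 1) = T); rewrite E1; apply: seteq_eq => y; split.
    apply: (mulset_sub T0 TD) => u v [q1 [_ ->]] [q2 [_ ->]]; exists (q1 * q2).
    by rewrite /emb !rmorphM hornerM /= mulrACA.
  move=> [q ->]; have [q' [hq' e]] := red q; have [q1 [hq1 e1]] := red 1%:P.
  exists [:: (emb c * (map_poly (@emb R) q1).[x], emb c * (map_poly (@emb R) q').[x])]; split.
    move=> u; rewrite mem_seq1 => /eqP -> /=; split; [exists q1| exists q']; split => //; exact: ltnW.
  by rewrite big_cons big_nil addr0 /= -e -e1 /emb map_polyC hornerC /= tofrac1 mulr1 rmorphM mulrA.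
have Jred : star_reduction st J I.
  by split => //; exists 1%N; rewrite E2 E3 => y; exact: iff_refl.
have hb2 := H I Iideal Inz Ifg J Jred.
have hIx : I (emb c * x).
  have [q2 [hq2 e2]] := red 'X; exists q2; split; first exact: ltnW.
  by rewrite -e2 /emb map_polyX hornerX.
have := hext I (ideal_frac Iideal Inz) _ hIx.
move=> /(proj2 (hb2 _)) /(proj1 (hsc _ _ hc (@frac_Rset R) _)) [z [/(proj1 (hR _)) hz ez]].
by rewrite (mulfI hc ez).
Qed.
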